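(* Suppose there exists a (possibly randomized) one-way communication protocol in which each message has at most $c$ bits and which solves $\mathrm{OvME}_{n,k,t}$ with probability at least $\frac12+\varepsilon$ for some $\varepsilon>0$. Then there exists a deterministic one-way protocol for $\mathrm{HLP}_{n,t}$ in which Alice sends at most $c$ bits and Bob answers correctly with probability at least $\frac12+\varepsilon/k$.
   Context: One-vs-Many-Expanders $\mathrm{OvME}_{n,k,t}$: $n$ vertices $V$, a uniformly random labeling $\Sigma$ partitioning $V$ into $t$ equal-size classes $\Sigma_1,\dots,\Sigma_t$, unknown to the players ($4t$ divides $n$). Players $P_1,\dots,P_k$; $P_i$ receives a matching $M_i$ of size $n/4$. With probability $1/2$ each: Yes-case, each $M_i$ independently uniform over all matchings of size $n/4$ on $V$; No-case, each $M_i$ independently uniform over matchings of size $n/4$ with exactly $n/(4t)$ edges inside each class $\Sigma_j$. Player $P_1$ sends a message to $P_2$, $P_2$ (knowing $M_2$ and the received message) to $P_3$, and so on; $P_k$ outputs Yes or No. Hidden Labeling Problem $\mathrm{HLP}_{n,t}$: Alice gets a uniformly random labeling $\Sigma$ of $V$ into $t$ equal-size classes, Bob gets a matching $M$ of size $n/4$; with probability $1/2$ each, Yes-case: $M$ uniform over all matchings of size $n/4$ on $V$; No-case: $M$ uniform over matchings of size $n/4$ with exactly $n/(4t)$ edges inside each class. Alice sends one message to Bob, who outputs Yes or No. Success probability is over the input distribution and protocol randomness. *)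

(* Defs.v *)
From mathcomp Require Import all_boot all_order all_algebra.
Set Implicit Arguments. Unset Strict Implicit. Unset Printing Implicit Defensive.
Import Order.TTheory GRing.Theory Num.Theory.
Local Open Scope ring_scope.

Definition Matching (n : nat) := {set {set 'I_n}}.

Definition is_matching n (M : Matching n) : bool :=
  [forall e in M, #|e| == 2%N] &&
  [forall e in M, forall e' in M, (e != e') ==> [disjoint e & e']].

Definition matchings n : {set Matching n} :=
  [set M : Matching n | is_matching M && (#|M| == n %/ 4)%N].

Definition Labeling n t := {ffun 'I_n -> 'I_t}.

Definition labelings n t : {set Labeling n t} :=
  [set S : Labeling n t | [forall j : 'I_t, #|[set v | S v == j]| == n %/ t]%N].

Definition lclass n t (S : Labeling n t) (j : 'I_t) : {set 'I_n} :=
  [set v | S v == j].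

Definition no_matchings n t (S : Labeling n t) : {set Matching n} :=
  [set M in matchings n |
     [forall j : 'I_t, #|[set e in M | e \subset lclass S j]| == n %/ (4 * t)]%N].

Definition avg (R : numFieldType) (T : finType) (A : {set T}) (F : T -> R) : R :=
  (#|A|%:R)^-1 * \sum_(x in A) F x.

Definition msg (c : nat) := c.-tuple bool.
Definition msg0 (c : nat) : msg c := nseq_tuple c false.

(* Inputs of players P_1..P_k, indexed 0..k-1. *)
Definition yes_inputs n k : {set {ffun 'I_k -> Matching n}} :=
  [set Ms : {ffun 'I_k -> Matching n} | [forall i, Ms i \in matchings n]].
Definition no_inputs n t k (S : Labeling n t) : {set {ffun 'I_k -> Matching n}} :=
  [set Ms : {ffun 'I_k -> Matching n} | [forall i, Ms i \in no_matchings S]].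

(* A deterministic one-way k-player protocol with c-bit messages:
   player i (0-indexed, i < k-1) sends  step i m M_i  where m is the message
   received from player i-1 (msg0 for the first player, which receives nothing);
   the last player (index k-1) outputs  out m M_{k-1}  (true = Yes). *)
Definition input_at n k (Ms : {ffun 'I_k -> Matching n}) (i : nat) : Matching n :=
  odflt set0 (omap Ms (insub i)).

Fixpoint ovme_msg n c k (step : nat -> msg c -> Matching n -> msg c)
    (Ms : {ffun 'I_k -> Matching n}) (i : nat) : msg c :=
  match i with
  | 0 => msg0 c
  | i'.+1 => step i' (ovme_msg step Ms i') (input_at Ms i')
  end.

Definition ovme_run n c k (step : nat -> msg c -> Matching n -> msg c)
    (out : msg c -> Matching n -> bool) (Ms : {ffun 'I_k -> Matching n}) : bool :=
  out (ovme_msg step Ms k.-1) (input_at Ms k.-1).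

(* Success probability of a randomized (public-coin, random seed r drawn from
   the distribution mu on the finite type Rnd) protocol on OvME_{n,k,t}. *)
Definition ovme_success (R : numFieldType) n k t c (Rnd : finType) (mu : Rnd -> R)
    (step : Rnd -> nat -> msg c -> Matching n -> msg c)
    (out : Rnd -> msg c -> Matching n -> bool) : R :=
  2^-1 * avg (labelings n t) (fun S : Labeling n t =>
           avg (yes_inputs n k) (fun Ms =>
             \sum_r mu r * (ovme_run (step r) (out r) Ms == true)%:R))
  + 2^-1 * avg (labelings n t) (fun S : Labeling n t =>
           avg (no_inputs k S) (fun Ms =>
             \sum_r mu r * (ovme_run (step r) (out r) Ms == false)%:R)).

Definition hlp_success (R : numFieldType) n t c
    (alice : Labeling n t -> msg c) (bob : msg c -> Matching n -> bool) : R :=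
  2^-1 * avg (labelings n t) (fun S : Labeling n t =>
           avg (matchings n) (fun M => (bob (alice S) M == true)%:R))
  + 2^-1 * avg (labelings n t) (fun S : Labeling n t =>
           avg (no_matchings S) (fun M => (bob (alice S) M == false)%:R)).

(* Main.v *)
Require Import Defs.
From mathcomp Require Import all_boot all_order all_algebra.
Import Order.TTheory GRing.Theory Num.Theory.
Local Open Scope ring_scope.
From mathcomp Require Import zify ring lra.
Set Implicit Arguments. Unset Strict Implicit. Unset Printing Implicit Defensive.
Import Order.TTheory GRing.Theory Num.Theory.
Local Open Scope ring_scope.


Section Avg.
Variable R : numFieldType.
Implicit Types (T : finType).

Lemma avgD T (A : {set T}) (f g : T -> R) :
  avg A (fun x => f x + g x) = avg A f + avg A g.
Proof. by rewrite /avg big_split mulrDr. Qed.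

Lemma avgZ T (A : {set T}) (c : R) (f : T -> R) :
  avg A (fun x => c * f x) = c * avg A f.
Proof. by rewrite /avg -mulr_sumr mulrCA. Qed.

Lemma avgH T (A : {set T}) (f g : T -> R) :
  avg A (fun x => 2^-1 * f x + 2^-1 * g x) = 2^-1 * avg A f + 2^-1 * avg A g.
Proof. by rewrite avgD !avgZ. Qed.

Lemma avg_sum T (I : finType) (A : {set T}) (f : I -> T -> R) :
  avg A (fun x => \sum_i f i x) = \sum_i avg A (f i).
Proof.
have E : \sum_(x in A) \sum_i f i x = \sum_i \sum_(x in A) f i x by rewrite exchange_big.
rewrite /avg -mulr_sumr; congr (_ * _); exact: E.
Qed.

Lemma avg_swap T T' (A : {set T}) (B : {set T'}) (F : T -> T' -> R) :
  avg A (fun a => avg B (fun b => F a b)) = avg B (fun b => avg A (fun a => F a b)).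
Proof.
rewrite /avg mulr_sumr [RHS]mulr_sumr.
under eq_bigr do rewrite mulr_sumr mulr_sumr.
under [RHS]eq_bigr do rewrite mulr_sumr mulr_sumr.
rewrite exchange_big; apply: eq_bigr => b _; apply: eq_bigr => a _.
by rewrite mulrCA.
Qed.

Lemma avg_ext T (A : {set T}) (f g : T -> R) :
  (forall x, x \in A -> f x = g x) -> avg A f = avg A g.
Proof. by move=> H; rewrite /avg; congr (_ * _); apply: eq_bigr. Qed.

Lemma avg_le T (A : {set T}) (f g : T -> R) :
  (forall x, x \in A -> f x <= g x) -> avg A f <= avg A g.
Proof.
move=> H; rewrite /avg ler_wpM2l ?invr_ge0 ?ler0n //; exact: ler_sum.
Qed.

Lemma avg_ge0 T (A : {set T}) (f : T -> R) :
  (forall x, 0 <= f x) -> 0 <= avg A f.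
Proof. by move=> H; rewrite /avg mulr_ge0 ?invr_ge0 ?ler0n ?sumr_ge0. Qed.

Lemma avg_const T (A : {set T}) (c : R) : A != set0 -> avg A (fun _ => c) = c.
Proof.
move=> /set0Pn[x xA]; rewrite /avg sumr_const -[c *+ _]mulr_natl mulrA mulVf ?mul1r //.
by rewrite pnatr_eq0 -lt0n; apply/card_gt0P; exists x.
Qed.

End Avg.
Section Avg2.
Variable R : realFieldType.
Implicit Types (T : finType).
Lemma avg_exists T (A : {set T}) (f : T -> R) (c : R) :
  0 < c -> c <= avg A f -> exists x, c <= f x.
Proof.
move=> c0 H; case: (pickP (fun x => c <= f x)) => [x Hx|Hn]; first by exists x.
have lt : forall x, f x < c by move=> x; move: (Hn x) => /negbT; rewrite -ltNge.
case: (set_0Vmem A) => [A0|[x xA]].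
  by move: H; rewrite A0 /avg cards0 invr0 mul0r; rewrite leNgt c0.
have : avg A f < avg A (fun _ => c).
  rewrite /avg ltr_pM2l ?invr_gt0 ?ltr0n; last by apply/card_gt0P; exists x.
  by apply: ltr_sum => //; apply/hasP; exists x => //; rewrite mem_index_enum.
rewrite avg_const; last by apply/set0Pn; exists x.
by rewrite ltNge H.
Qed.

Lemma wsum_exists (I : finType) (w f : I -> R) (c : R) :
  (forall i, 0 <= w i) -> \sum_i w i = 1 -> c <= \sum_i w i * f i ->
  exists i, c <= f i.
Proof.
move=> w0 w1 H; case: (pickP (fun x => c <= f x)) => [x Hx|Hn]; first by exists x.
have lt : forall x, f x < c by move=> x; move: (Hn x) => /negbT; rewrite -ltNge.
have [i wi] : exists i, 0 < w i.
  case: (pickP (fun i => 0 < w i)) => [i Hi|Hn2]; first by exists i.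
  have : \sum_i w i = 0.
    apply: big1 => i _; apply/eqP; rewrite eq_le w0 andbT.
    by move: (Hn2 i) => /negbT; rewrite -leNgt.
  by rewrite w1 => /eqP; rewrite oner_eq0.
have : 0 < \sum_j w j * (c - f j).
  rewrite (bigD1 i) //=.
  have h1 : 0 < w i * (c - f i) by rewrite mulr_gt0 // subr_gt0.
  apply: (lt_le_trans h1); rewrite lerDl; apply: sumr_ge0 => j _.
  by rewrite mulr_ge0 // subr_ge0 ltW.
have -> : \sum_j w j * (c - f j) = c - \sum_j w j * f j.
  under eq_bigr do rewrite mulrBr.
  by rewrite sumrB -mulr_suml w1 mul1r.
by rewrite subr_gt0 ltNge H.
Qed.

End Avg2.


Section Prod.
Variables (T : finType) (x0 : T) (k : nat).

Definition prodS (D : 'I_k -> {set T}) : {set {ffun 'I_k -> T}} :=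
  [set Ms : {ffun 'I_k -> T} | [forall i, Ms i \in D i]].

Definition mrg (j : 'I_k) (x : {ffun 'I_k -> T}) (M : T) (b : {ffun 'I_k -> T}) :
  {ffun 'I_k -> T} :=
  [ffun i : 'I_k => if (i < j)%N then x i else if (j < i)%N then b i else M].

Definition lft (j : 'I_k) (Ms : {ffun 'I_k -> T}) : {ffun 'I_k -> T} :=
  [ffun i : 'I_k => if (i < j)%N then Ms i else x0].
Definition rgt (j : 'I_k) (Ms : {ffun 'I_k -> T}) : {ffun 'I_k -> T} :=
  [ffun i : 'I_k => if (j < i)%N then Ms i else x0].

Definition Dl (D : 'I_k -> {set T}) (j : 'I_k) (i : 'I_k) := if (i < j)%N then D i else [set x0].
Definition Dr (D : 'I_k -> {set T}) (j : 'I_k) (i : 'I_k) := if (j < i)%N then D i else [set x0].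

Lemma in_prodS D Ms : (Ms \in prodS D) = [forall i, Ms i \in D i].
Proof. by rewrite inE. Qed.

Lemma prodS_ext D D' : (forall i, D i = D' i) -> prodS D = prodS D'.
Proof.
by move=> H; apply/setP => Ms; rewrite !in_prodS; apply: eq_forallb => i; rewrite H.
Qed.

Lemma mrg_in (D : 'I_k -> {set T}) j x M b :
  ((mrg j x M b \in prodS D) && ((lft j (mrg j x M b), (mrg j x M b j, rgt j (mrg j x M b))) == (x, (M, b))))
  = [&& x \in prodS (Dl D j), M \in D j & b \in prodS (Dr D j)].
Proof.
rewrite !in_prodS; apply/idP/idP.
- case/andP => /forallP HD /eqP [Ex EM Eb].
  apply/and3P; split.
  + rewrite -Ex; apply/forallP => i; rewrite /Dl ffunE; case: ifP => h; first exact: HD.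
    by rewrite inE.
  + by rewrite -EM; have := HD j; rewrite ffunE ltnn.
  + rewrite -Eb; apply/forallP => i; rewrite /Dr ffunE; case: ifP => h; first exact: HD.
    by rewrite inE.
- case/and3P => /forallP Hx HM /forallP Hb; apply/andP; split.
  + apply/forallP => i; rewrite ffunE; case: (ltngtP i j) => h.
    * by have := Hx i; rewrite /Dl h.
    * by have := Hb i; rewrite /Dr h.
    * by have -> : i = j by apply: val_inj.
  + apply/eqP; congr (_, (_, _)).
    * apply/ffunP => i; rewrite !ffunE; case: ifP => h; first by rewrite h.
      by move: (Hx i); rewrite /Dl h inE => /eqP.
    * by rewrite ffunE ltnn.
    * apply/ffunP => i; rewrite !ffunE; case: ifP => h.
        by rewrite ltnNge (ltnW h) /= h.
      by move: (Hb i); rewrite /Dr h inE => /eqP.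
Qed.

Lemma mrg_lr j Ms : mrg j (lft j Ms) (Ms j) (rgt j Ms) = Ms.
Proof.
apply/ffunP => i; rewrite !ffunE; case: (ltngtP i j) => h //.
by have -> : i = j by apply: val_inj.
Qed.

Variable R : numFieldType.

Lemma sum_prod (D : 'I_k -> {set T}) (j : 'I_k) (F : {ffun 'I_k -> T} -> R) :
  \sum_(Ms in prodS D) F Ms =
  \sum_(x in prodS (Dl D j)) \sum_(M in D j) \sum_(b in prodS (Dr D j)) F (mrg j x M b).
Proof.
under [RHS]eq_bigr do rewrite pair_big.
rewrite pair_big /=.
rewrite (reindex_onto (fun p : {ffun 'I_k -> T} * (T * {ffun 'I_k -> T}) => mrg j p.1 p.2.1 p.2.2)
   (fun Ms => (lft j Ms, (Ms j, rgt j Ms)))) /=; last by move=> Ms _; rewrite mrg_lr.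
apply: eq_bigl => [[x [M b]]] /=.
exact: mrg_in.
Qed.

Lemma avg_prod (D : 'I_k -> {set T}) (j : 'I_k) (F : {ffun 'I_k -> T} -> R) :
  avg (prodS D) F =
  avg (prodS (Dl D j)) (fun x => avg (D j) (fun M => avg (prodS (Dr D j)) (fun b => F (mrg j x M b)))).
Proof.
have Ec : #|prodS D|%:R = #|prodS (Dl D j)|%:R * #|D j|%:R * #|prodS (Dr D j)|%:R :> R.
  have := sum_prod D j (fun _ => 1); rewrite !sumr_const.
  move=> ->.
  rewrite -!mulrnA -!natrM; congr _%:R. Show. nia.
rewrite /avg Ec (sum_prod D j).
have H1 : forall x, #|D j|%:R^-1 * \sum_(M in D j) (#|prodS (Dr D j)|%:R^-1 *
      \sum_(b in prodS (Dr D j)) F (mrg j x M b)) =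
    #|D j|%:R^-1 * #|prodS (Dr D j)|%:R^-1 *
      \sum_(M in D j) \sum_(b in prodS (Dr D j)) F (mrg j x M b) :> R.
  by move=> x; rewrite -mulr_sumr mulrA.
rewrite (eq_bigr _ (fun x _ => H1 x)).
by rewrite -mulr_sumr !invfM !mulrA.
Qed.

End Prod.


Lemma no_matchings_ne n t (S : Labeling n t) :
  (0 < t)%N -> (4 * t %| n)%N -> S \in labelings n t -> exists M, M \in no_matchings S.
Proof.
move=> t0 dv hS.
set q := (n %/ (4 * t))%N.
have Hn : n = (q * (4 * t))%N by rewrite divnK.
case: (posnP n) => [n0|npos].
  exists set0; rewrite inE; apply/andP; split.
    rewrite inE cards0; apply/andP; split; last by rewrite n0.
    by apply/andP; split; apply/forallP => e; rewrite in_set0.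
  apply/forallP => j; have E0 : (n %/ (4 * t) = 0)%N by rewrite n0 div0n.
  rewrite E0.
  by apply/eqP/eqP; rewrite cards_eq0; apply/eqP/setP => e; rewrite !inE.
have v0 : 'I_n := Ordinal npos.
move: hS; rewrite inE => /forallP Hlab.
pose s (j : 'I_t) := enum (lclass S j).
have Hsz : forall j, size (s j) = (4 * q)%N.
  move=> j; rewrite /s -cardE; move/eqP: (Hlab j) => ->.
  by rewrite Hn mulnA [(q * 4)%N]mulnC mulnK.
pose xv (j : 'I_t) (p : nat) := nth v0 (s j) p.
have xv_in : forall j p, (p < 4 * q)%N -> S (xv j p) = j.
  move=> j p hp; have : xv j p \in s j by rewrite mem_nth ?Hsz.
  by rewrite mem_enum inE => /eqP.
have xv_inj : forall j p p', (p < 4 * q)%N -> (p' < 4 * q)%N -> xv j p = xv j p' -> p = p'.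
  move=> j p p' hp hp' /eqP; rewrite nth_uniq ?Hsz ?enum_uniq //; by move/eqP.
pose e (ji : 'I_t * 'I_q) : {set 'I_n} := [set xv ji.1 (2 * ji.2)%N; xv ji.1 (2 * ji.2).+1].
have bnd1 : forall i : 'I_q, (2 * i < 4 * q)%N by move=> [i hi] /=; lia.
have bnd2 : forall i : 'I_q, ((2 * i).+1 < 4 * q)%N by move=> [i hi] /=; lia.
have e_meet : forall p p' v, v \in e p -> v \in e p' -> p = p'.
  move=> [j i] [j' i'] v /= h1 h2.
  have hj : j = j'.
    have Sv1 : S v = j by case/set2P: h1 => ->; rewrite xv_in ?bnd1 ?bnd2.
    have Sv2 : S v = j' by case/set2P: h2 => ->; rewrite xv_in ?bnd1 ?bnd2.
    by rewrite -Sv1 -Sv2.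
  subst j'; congr (_, _); apply: ord_inj.
  move: h2; case/set2P: h1 => ->; case/set2P.
  - by move/(xv_inj _ _ _ (bnd1 i) (bnd1 i')); lia.
  - by move/(xv_inj _ _ _ (bnd1 i) (bnd2 i')); lia.
  - by move/(xv_inj _ _ _ (bnd2 i) (bnd1 i')); lia.
  - by move/(xv_inj _ _ _ (bnd2 i) (bnd2 i')); lia.
have e_inj : injective e.
  move=> p p' E; apply: (@e_meet p p' (xv p.1 (2 * p.2)%N)); first by rewrite set21.
  by rewrite -E set21.
have e_card : forall p, #|e p| = 2%N.
  move=> [j i]; rewrite cards2 /=; case: eqP => // /xv_inj E.
  by move: (E (bnd1 i) (bnd2 i)); lia.
exists (e @: [set: 'I_t * 'I_q]); rewrite inE; apply/andP; split.
  rewrite inE; apply/andP; split.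
    apply/andP; split.
      by apply/forallP => e0; apply/implyP => /imsetP [p _ ->]; rewrite e_card.
    apply/forallP => e0; apply/implyP => /imsetP [p _ ->].
    apply/forallP => e1; apply/implyP => /imsetP [p' _ ->].
    apply/implyP => hne; rewrite -setI_eq0; apply/eqP/setP => v.
    rewrite in_set0 in_setI; apply: negbTE; apply/negP => /andP [h1 h2].
    by move: hne; rewrite (e_meet _ _ _ h1 h2) eqxx.
  rewrite card_imset // cardsT card_prod !card_ord Hn.
  by apply/eqP; rewrite [(q * (4 * t))%N](_ : _ = t * q * 4)%N ?mulnK //; lia.
apply/forallP => j.
have -> : [set e0 in e @: [set: 'I_t * 'I_q] | e0 \subset lclass S j] =
          (fun i => e (j, i)) @: [set: 'I_q].
  apply/setP => e0; rewrite inE; apply/idP/idP.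
    case/andP => /imsetP [[j' i] _ ->] hsub; apply/imsetP; exists i => //.
    have : xv j' (2 * i)%N \in lclass S j by apply: (subsetP hsub); rewrite set21.
    by rewrite inE xv_in // => /eqP ->.
  case/imsetP => i _ ->; apply/andP; split; first by apply: imset_f; rewrite inE.
  apply/subsetP => v; case/set2P => ->; by rewrite inE xv_in ?bnd1 ?bnd2.
rewrite card_imset ?cardsT ?card_ord //.
by move=> i i' /e_inj [].
Qed.


Lemma avg_le_pick (R : realFieldType) (T : finType) (A : {set T}) (f : T -> R) (x0 : T) :
  (forall x, 0 <= f x) -> avg A f <= f (odflt x0 [pick x | avg A f <= f x]).
Proof.
move=> f0; case: pickP => [x //|Hn] /=.
have lt : forall x, f x < avg A f by move=> x; move: (Hn x) => /negbT; rewrite -ltNge.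
case: (set_0Vmem A) => [A0|[x xA]].
  by move: (lt x0); rewrite A0 /avg cards0 invr0 mul0r ltNge f0.
have : avg A f < avg A (fun _ => avg A f).
  rewrite /avg ltr_pM2l ?invr_gt0 ?ltr0n; last by apply/card_gt0P; exists x.
  by apply: ltr_sum => //; apply/hasP; exists x => //; rewrite mem_index_enum.
by rewrite avg_const ?ltxx //; apply/set0Pn; exists x.
Qed.

Section Proto.
Variables (n c k : nat) (step : nat -> msg c -> Matching n -> msg c).

Lemma input_at_eq (Ms Ms' : {ffun 'I_k -> Matching n}) i :
  (forall o : 'I_k, nat_of_ord o = i -> Ms o = Ms' o) -> input_at Ms i = input_at Ms' i.
Proof. by move=> H; rewrite /input_at; case: insubP => [o _ oi|_] //=; rewrite H. Qed.

Lemma msg_dep (Ms Ms' : {ffun 'I_k -> Matching n}) j :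
  (forall o : 'I_k, (o < j)%N -> Ms o = Ms' o) -> ovme_msg step Ms j = ovme_msg step Ms' j.
Proof.
elim: j => [//|j IH] H /=.
rewrite IH; last by move=> o h; apply: H; apply: ltnW.
by congr step; apply: input_at_eq => o oj; apply: H; rewrite oj.
Qed.

Fixpoint cont (Ms : {ffun 'I_k -> Matching n}) (m : msg c) (j l : nat) : msg c :=
  match l with
  | 0 => m
  | l'.+1 => step (j + l') (cont Ms m j l') (input_at Ms (j + l'))
  end.

Lemma cont_msg Ms j l : ovme_msg step Ms (j + l) = cont Ms (ovme_msg step Ms j) j l.
Proof. by elim: l => [|l IH]; rewrite ?addn0 // addnS /= IH. Qed.

Lemma cont_dep (Ms Ms' : {ffun 'I_k -> Matching n}) m j l :
  (forall o : 'I_k, (j <= o)%N -> Ms o = Ms' o) -> cont Ms m j l = cont Ms' m j l.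
Proof.
move=> H; elim: l => [//|l IH] /=; rewrite IH; congr step.
by apply: input_at_eq => o oj; apply: H; rewrite oj leq_addr.
Qed.

End Proto.

Unset Implicit Arguments.

Theorem lemma5p4 (R : realFieldType) (n k t c : nat) (Rnd : finType)
    (mu : Rnd -> R)
    (step : Rnd -> nat -> msg c -> Matching n -> msg c)
    (out : Rnd -> msg c -> Matching n -> bool) (eps : R) :
  (0 < t)%N -> (4 * t %| n)%N -> (0 < k)%N ->
  (forall r, 0 <= mu r) -> \sum_r mu r = 1 ->
  0 < eps ->
  2^-1 + eps <= ovme_success k t mu step out ->
  exists (alice : Labeling n t -> msg c) (bob : msg c -> Matching n -> bool),
    2^-1 + eps / k%:R <= hlp_success R alice bob.
Proof.
move=> t0 dv k0 mu0 mu1 eps0 Hs.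
pose x0 : Matching n := set0.
pose Lab := labelings n t.
pose Y := matchings n.
pose run r (Ms : {ffun 'I_k -> Matching n}) := ovme_run (step r) (out r) Ms.
pose H (S : Labeling n t) (j : nat) :=
  prodS (fun i : 'I_k => if (i < j)%N then no_matchings S else Y).
pose A r j := avg Lab (fun S => avg (H S j) (fun Ms => (run r Ms == true)%:R : R)).
pose B r j := avg Lab (fun S => avg (H S j) (fun Ms => (run r Ms == false)%:R : R)).
have Lab_ne : Lab != set0.
  apply/negP => /eqP L0; move: Hs; rewrite /ovme_success -/Lab L0 /avg cards0 invr0 !mul0r.
  rewrite !mulr0 addr0; lra.
have H_ne : forall S j, S \in Lab -> H S j != set0.
  move=> S j hS; have [M hM] := no_matchings_ne t0 dv hS.
  have hY : M \in Y by move: hM; rewrite inE => /andP [].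
  apply/set0Pn; exists [ffun => M]; rewrite in_prodS; apply/forallP => i.
  by rewrite ffunE; case: ifP.
have AB : forall r j, A r j + B r j = 1.
  move=> r j; rewrite /A /B -avgD.
  rewrite (avg_ext (g := fun _ => 1)) ?avg_const // => S hS.
  rewrite -avgD (avg_ext (g := fun _ => 1)) ?avg_const ?H_ne // => Ms _.
  by case: (run r Ms); rewrite /= ?addr0 ?add0r.
have yesE : forall S, yes_inputs n k = H S 0.
  move=> S; apply/setP => Ms; rewrite /H in_prodS /yes_inputs ?inE; apply: eq_forallb => i.
  by rewrite ?ltn0.
have noE : forall S, no_inputs k S = H S k.
  move=> S; apply/setP => Ms; rewrite /H in_prodS /no_inputs ?inE; apply: eq_forallb => i.
  by rewrite ?ltn_ord.
have OV : ovme_success k t mu step out = \sum_r mu r * (2^-1 * A r 0 + 2^-1 * B r k).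
  rewrite /ovme_success.
  under eq_bigr do rewrite mulrDr [mu _ * (2^-1 * _)]mulrCA [mu _ * (2^-1 * _)]mulrCA.
  rewrite big_split /= -!mulr_sumr.
  congr (_ * _ + _ * _).
  - rewrite (avg_ext (g := fun S => \sum_r mu r * avg (H S 0) (fun Ms => (run r Ms == true)%:R))).
      rewrite avg_sum; apply: eq_bigr => r _; by rewrite avgZ.
    move=> S _; rewrite (yesE S) avg_sum; apply: eq_bigr => r _; by rewrite avgZ.
  - rewrite (avg_ext (g := fun S => \sum_r mu r * avg (H S k) (fun Ms => (run r Ms == false)%:R))).
      rewrite avg_sum; apply: eq_bigr => r _; by rewrite avgZ.
    move=> S _; rewrite (noE S) avg_sum; apply: eq_bigr => r _; by rewrite avgZ.
pose AL (j : 'I_k) (S : Labeling n t) := prodS (fun i : 'I_k => if (i < j)%N then no_matchings S else [set x0]).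
pose BR (j : 'I_k) := prodS (fun i : 'I_k => if (j < i)%N then Y else [set x0]).
pose Dfull (S : Labeling n t) (j : 'I_k) (Dm : {set Matching n}) := fun i : 'I_k =>
  if (i < j)%N then no_matchings S else if (j < i)%N then Y else Dm.
have hyb : forall S (j : 'I_k) Dm (f : {ffun 'I_k -> Matching n} -> R),
    avg (AL j S) (fun x => avg Dm (fun M => avg (BR j) (fun b => f (mrg j x M b))))
    = avg (prodS (Dfull S j Dm)) f.
  move=> S j Dm f; rewrite [RHS](avg_prod x0 _ j).
  have E1 : prodS (Dl x0 (Dfull S j Dm) j) = AL j S.
    by apply: prodS_ext => i; rewrite /Dl /Dfull; case: (ltngtP i j).
  have E2 : prodS (Dr x0 (Dfull S j Dm) j) = BR j.
    by apply: prodS_ext => i; rewrite /Dr /Dfull; case: (ltngtP i j).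
  have E3 : Dfull S j Dm j = Dm by rewrite /Dfull ltnn.
  by rewrite E1 E2 E3.
have HjE : forall S (j : 'I_k), H S j = prodS (Dfull S j Y).
  move=> S j; apply: prodS_ext => i; rewrite /Dfull; case: ifP => // _.
  by case: ifP.
have Hj1E : forall S (j : 'I_k), H S j.+1 = prodS (Dfull S j (no_matchings S)).
  move=> S j; apply: prodS_ext => i; rewrite /Dfull ltnS leq_eqVlt.
  case: (ltngtP i j) => h //=.
pose phi r (j : 'I_k) b (S : Labeling n t) x := 2^-1 * avg Y (fun M => (run r (mrg j x M b) == true)%:R : R)
   + 2^-1 * avg (no_matchings S) (fun M => (run r (mrg j x M b) == false)%:R : R).
pose L r j b := avg Lab (fun S => avg (AL j S) (phi r j b S)).
pose K r j := avg (BR j) (L r j).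
have KE : forall r (j : 'I_k), K r j = 2^-1 * A r j + 2^-1 * B r j.+1.
  move=> r j; rewrite /K /L avg_swap /A /B -!avgZ -avgD; apply: avg_ext => S _.
  rewrite avg_swap (HjE S j) (Hj1E S j) -!hyb -!avgZ -avgD; apply: avg_ext => x _.
  rewrite /phi avgH; congr (_ * _ + _ * _); exact: avg_swap.
have SK : forall r, \sum_(j < k) K r j = k%:R * 2^-1 + 2^-1 * (B r k - B r 0).
  move=> r.
  have E : forall j : 'I_k, K r j = 2^-1 + 2^-1 * (B r j.+1 - B r j).
    by move=> j; rewrite KE; move: (AB r j); lra.
  rewrite (eq_bigr _ (fun j _ => E j)) big_split /= -mulr_sumr sumr_const card_ord.
  rewrite -(big_mkord xpredT (fun j => B r j.+1 - B r j)) telescope_sumr //.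
  by congr (_ + _); rewrite mulrC mulr_natr.
pose G (j : 'I_k) := \sum_r mu r * K r j.
have SG : \sum_j G j = (k%:R - 1) * 2^-1 + ovme_success k t mu step out.
  rewrite OV /G exchange_big /=.
  have -> : (k%:R - 1) * 2^-1 = \sum_r mu r * ((k%:R - 1) * 2^-1) :> R.
    by rewrite -mulr_suml mu1 mul1r.
  rewrite -big_split /=; apply: eq_bigr => r _.
  rewrite -mulr_sumr SK -mulrDr; congr (_ * _); move: (AB r 0%N); lra.
pose cc := 2^-1 + eps / k%:R.
have kpos : 0 < k%:R :> R by rewrite ltr0n.
have cpos : 0 < cc by rewrite /cc; apply: addr_gt0; [rewrite invr_gt0 ltr0n | apply: divr_gt0].
have [j Hj] : exists j, cc <= G j.
  apply: (@avg_exists _ _ [set: 'I_k]) => //.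
  rewrite /avg cardsT card_ord.
  rewrite (eq_bigl xpredT) => [|i]; last by rewrite in_setT.
  rewrite SG.
  have cE : cc = k%:R^-1 * (k%:R * 2^-1 + eps).
    rewrite /cc; field; by rewrite lt0r_neq0.
  rewrite cE ler_wpM2l ?invr_ge0 ?ler0n //.
  move: Hs; lra.
have [r Hr] : exists r, cc <= K r j by apply: (wsum_exists mu0 mu1).
have [b Hb] : exists b, cc <= L r j b by apply: (avg_exists cpos Hr).
pose x0f : {ffun 'I_k -> Matching n} := [ffun => x0].
pose a S := odflt x0f [pick x | avg (AL j S) (phi r j b S) <= phi r j b S x].
pose alice S := ovme_msg (step r) (mrg j (a S) x0 b) j.
pose bob m M := out r (cont (step r) (mrg j b M b) m j (k.-1 - j)) (input_at (mrg j b M b) k.-1).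
exists alice, bob.
have jk : (j <= k.-1)%N by have := ltn_ord j; lia.
have bob_ok : forall S M, bob (alice S) M = run r (mrg j (a S) M b).
  move=> S M; rewrite /bob /alice /run /ovme_run.
  set Ms := mrg j (a S) M b.
  have E1 : input_at Ms k.-1 = input_at (mrg j b M b) k.-1.
    apply: input_at_eq => o ho; rewrite /Ms /mrg !ffunE.
    have h : (o < j)%N = false by apply/negbTE; rewrite -leqNgt ho.
    by rewrite h.
  have E2 : ovme_msg (step r) Ms k.-1 = cont (step r) Ms (ovme_msg (step r) Ms j) j (k.-1 - j).
    by rewrite -cont_msg subnKC.
  have E3 : ovme_msg (step r) Ms j = ovme_msg (step r) (mrg j (a S) x0 b) j.
    by apply: msg_dep => o ho; rewrite /Ms /mrg !ffunE ho.
  have E4 : forall m l, cont (step r) Ms m j l = cont (step r) (mrg j b M b) m j l.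
    move=> m l; apply: cont_dep => o ho; rewrite /Ms /mrg !ffunE.
    have h : (o < j)%N = false by apply/negbTE; rewrite -leqNgt ho.
    by rewrite h.
  by rewrite E1 E2 E3 E4.
have phi0 : forall S x, 0 <= phi r j b S x.
  move=> S x; rewrite /phi; apply: addr_ge0; apply: mulr_ge0; rewrite ?invr_ge0 ?ler0n //;
  by apply: avg_ge0 => M; rewrite ler0n.
have HE : hlp_success R alice bob = avg Lab (fun S => phi r j b S (a S)).
  rewrite /phi avgH /hlp_success; congr (_ * _ + _ * _); apply: avg_ext => S _;
  by apply: avg_ext => M _; rewrite bob_ok.
rewrite HE; apply: (le_trans Hb); apply: avg_le => S _.
exact: avg_le_pick.
Qed.
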